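(* Let $(\vec u,\vec B)$ and $(\vec t,\vec C)$ be proper factorization patterns over $A$, and let $(v_n)_n$, $(w_n)_n$ be sequences of words such that $(v_n)_n$ is $(\vec u,\vec B)$-adequate, $(w_n)_n$ is $(\vec t,\vec C)$-adequate, and $v_n\sim_n w_n$ for every $n\ge0$. Then $\vec u=\vec t$ and $\vec B=\vec C$.
   Context: For $B\subseteq A$, $B^{\circledast}$ is the set of words over $B$ in which every symbol of $B$ occurs. A factorization pattern is $(\vec u,\vec B)$ with $\vec u=(u_0,\dots,u_p)\in(A^* )^{p+1}$, $\vec B=(B_1,\dots,B_p)$ nonempty subsets of $A$, $p\ge0$; $L(\vec u,\vec B,n)=u_0(B_1^{\circledast})^nu_1\cdots(B_p^{\circledast})^nu_p$; $(w_n)_n$ is $(\vec u,\vec B)$-adequate if $w_n\in L(\vec u,\vec B,n)$ for all $n$. The pattern is proper if (i) for all $i=0,\dots,p-1$ the last symbol of $u_i$ (if $u_i$ nonempty) is not in $B_{i+1}$, and for all $i=1,\dots,p$ the first symbol of $u_i$ (if nonempty) is not in $B_i$; and (ii) for all $i=1,\dots,p-1$, if $u_i=\varepsilon$ then $B_i\not\subseteq B_{i+1}$ and $B_{i+1}\not\subseteq B_i$. For words $v,w$, $v\sim_n w$ means that $v$ and $w$ have the same subwords (subsequences) of length at most $n$. *)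

(* Defs.v *)
From mathcomp Require Import all_boot.
Set Implicit Arguments. Unset Strict Implicit. Unset Printing Implicit Defensive.

Section Patterns.
Variable A : finType.

Definition full_star (B : {set A}) (w : seq A) : bool :=
  all (fun a => a \in B) w && [forall b in B, b \in w].

Definition in_pow (B : {set A}) (n : nat) (w : seq A) : Prop :=
  exists ws : seq (seq A),
    [/\ size ws = n, all (full_star B) ws & w = flatten ws].

(* A factorization pattern is (u, B) with u = [:: u_0; ...; u_p] and
   B = [:: B_1; ...; B_p] (0-based lists: B_i is nth set0 B (i-1)).
   inL B u n w  <->  w \in u_0 (B_1^circledast)^n u_1 ... (B_p^circledast)^n u_p. *)
Fixpoint inL (B : seq {set A}) (u : seq (seq A)) (n : nat) (w : seq A) : Prop :=
  match B, u with
  | [::], [:: u0] => w = u0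
  | b :: B', u0 :: u' =>
      exists x r, [/\ w = u0 ++ x ++ r, in_pow b n x & inL B' u' n r]
  | _, _ => False
  end.

Definition L (u : seq (seq A)) (B : seq {set A}) (n : nat) (w : seq A) : Prop :=
  inL B u n w.

Definition is_pattern (u : seq (seq A)) (B : seq {set A}) : Prop :=
  size u = (size B).+1 /\ forall i, i < size B -> nth set0 B i != set0.

(* proper pattern; indices 0-based on lists, comments use paper's indices *)
Definition proper_pattern (u : seq (seq A)) (B : seq {set A}) : Prop :=
  is_pattern u B /\
  (* (i) last symbol of u_i (i = 0..p-1) is not in B_{i+1} *)
  (forall i, i < size B -> forall (s : seq A) (a : A),
      nth [::] u i = rcons s a -> a \notin nth set0 B i) /\
  (* (i) first symbol of u_i (i = 1..p) is not in B_i *)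
  (forall i, 1 <= i <= size B -> forall (a : A) (s : seq A),
      nth [::] u i = a :: s -> a \notin nth set0 B i.-1) /\
  (* (ii) for i = 1..p-1, u_i empty -> B_i, B_{i+1} incomparable *)
  (forall i, 1 <= i < size B -> nth [::] u i = [::] ->
      ~~ (nth set0 B i.-1 \subset nth set0 B i) /\
      ~~ (nth set0 B i \subset nth set0 B i.-1)).

Definition adequate (u : seq (seq A)) (B : seq {set A}) (v : nat -> seq A) : Prop :=
  forall n, L u B n (v n).

Definition simn (n : nat) (v w : seq A) : Prop :=
  forall s : seq A, size s <= n -> subseq s v = subseq s w.

End Patterns.

(* Main.v *)
Require Import Defs.
From mathcomp Require Import all_boot.
Set Implicit Arguments. Unset Strict Implicit. Unset Printing Implicit Defensive.

Section Atoms.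
Variable A : finType.
Implicit Types (B C : {set A}) (s r w z : seq A) (M n : nat).

Inductive atom := ALet of A | AStar of {set A}.

Fixpoint alang (l : seq atom) (w : seq A) : Prop :=
  match l with
  | [::] => w = [::]
  | ALet a :: l' => exists2 r, w = a :: r & alang l' r
  | AStar B :: l' => exists y r, [/\ w = y ++ r, all (fun x => x \in B) y & alang l' r]
  end.

Definition blk (M : nat) (B : {set A}) := flatten (nseq M (enum B)).

Fixpoint acanon M (l : seq atom) : seq A :=
  match l with
  | [::] => [::]
  | ALet a :: l' => a :: acanon M l'
  | AStar B :: l' => blk M B ++ acanon M l'
  end.

Implicit Types (l : seq atom).

Definition dclo l s := exists2 r, alang l r & subseq s r.
Definition aincl l1 l2 := forall s, dclo l1 s -> dclo l2 s.

Definition ok_atom x := if x is AStar B then B != set0 else true.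
Definition ok_adj x y := match x, y with
  | ALet a, AStar B => a \notin B
  | AStar B, ALet a => a \notin B
  | AStar B, AStar C => ~~ (B \subset C) && ~~ (C \subset B)
  | _, _ => true end.
Definition properA l := all ok_atom l && sorted ok_adj l.

Lemma subseq_cons_cat (c : A) w s r : c \in w -> subseq s r -> subseq (c :: s) (w ++ r).
Proof.
move=> cw sr; have -> : c :: s = [:: c] ++ s by [].
by apply: cat_subseq; rewrite // sub1seq.
Qed.

Lemma subseq_blocks (P : pred A) (s : seq A) (ws : seq (seq A)) :
  all P s -> size s <= size ws -> (forall w, w \in ws -> forall x, P x -> x \in w) ->
  subseq s (flatten ws).
Proof.
elim: s ws => [|c s IH] ws; first by rewrite sub0seq.
case: ws => [|w ws] //= /andP[Pc Ps] sz H.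
apply: subseq_cons_cat; first by apply: H; rewrite ?mem_head.
apply: IH => // w' w'in; apply: H; by rewrite inE w'in orbT.
Qed.

Lemma blk_S M B : blk M.+1 B = enum B ++ blk M B. Proof. by []. Qed.

Lemma all_blk M B : all (fun x => x \in B) (blk M B).
Proof.
elim: M => [|M IH] //; rewrite blk_S all_cat IH andbT.
by apply/allP => x; rewrite mem_enum.
Qed.

Lemma size_blk M B : size (blk M B) = M * #|B|.
Proof. elim: M => [|M IH] //; by rewrite blk_S size_cat IH mulSn cardE. Qed.

Lemma sub_blk B y M : all (fun x => x \in B) y -> size y <= M -> subseq y (blk M B).
Proof.
move=> ay sz; apply: (subseq_blocks ay); first by rewrite size_nseq.
by move=> w /nseqP[-> _] x; rewrite mem_enum.
Qed.

Lemma blk_mono M M' B : M <= M' -> subseq (blk M B) (blk M' B).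
Proof.
elim: M M' => [|M IH] M' H; first by rewrite /blk /= sub0seq.
case: M' H => // M' H; rewrite !blk_S; apply: cat_subseq => //; exact: IH.
Qed.

Lemma alang_canon M l : alang l (acanon M l).
Proof.
elim: l => [|[a|B] l IH] //=; first by exists (acanon M l).
exists (blk M B), (acanon M l); split => //; exact: all_blk.
Qed.

Lemma canon_mono M M' l : M <= M' -> subseq (acanon M l) (acanon M' l).
Proof.
move=> H; elim: l => [|[a|B] l IH] //=; first by rewrite eqxx.
exact: cat_subseq (blk_mono B H) IH.
Qed.

Lemma lang_sub_canon l r M : alang l r -> size r <= M -> subseq r (acanon M l).
Proof.
elim: l r => [|[a|B] l IH] r /=.
- by move=> -> _.
- case=> r' -> Hr sz; rewrite /= eqxx; apply: IH => //; exact: ltnW.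
- case=> y [r' [-> ay Hr]]; rewrite size_cat => sz; apply: cat_subseq.
    apply: sub_blk ay _; exact: leq_trans (leq_addr _ _) sz.
  apply: IH Hr _; exact: leq_trans (leq_addl _ _) sz.
Qed.

Lemma D_canon M l : dclo l (acanon M l).
Proof. by exists (acanon M l); [exact: alang_canon|]. Qed.

Lemma D_down l s s' : dclo l s -> subseq s' s -> dclo l s'.
Proof. case=> r Hr ss ss'; exists r => //; exact: subseq_trans ss' ss. Qed.

Lemma InclI l1 l2 : (forall M, dclo l2 (acanon M l1)) -> aincl l1 l2.
Proof.
move=> H s [r Hr sr]; apply: (D_down (H (size r))).
exact: subseq_trans sr (lang_sub_canon Hr (leqnn _)).
Qed.

Lemma D_nil s : dclo [::] s -> s = [::].
Proof. case=> r /= ->; by rewrite subseq0 => /eqP. Qed.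

Lemma subseq_behead (b : A) s r : subseq s (b :: r) -> subseq (behead s) r.
Proof.
case: s => [|x s] /=; first by rewrite sub0seq.
case: eqP => _ H //; exact: subseq_trans (subseq_cons s x) H.
Qed.

Lemma D_let_behead b l s : dclo (ALet b :: l) s -> dclo l (behead s).
Proof. case=> r /= [r' -> Hr'] sr; exists r' => //; exact: subseq_behead sr. Qed.

Lemma D_let_skip b l x s : dclo (ALet b :: l) (x :: s) -> x != b -> dclo l (x :: s).
Proof.
case=> r /= [r' -> Hr'] sr xb; exists r' => //.
by move: sr => /=; rewrite (negbTE xb).
Qed.

Lemma subseq_split (s y r : seq A) : subseq s (y ++ r) ->
  exists s1 s2, [/\ s = s1 ++ s2, subseq s1 y & subseq s2 r].
Proof.
elim: y s => [|c y IH] s /=.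
  by move=> H; exists [::], s; split => //; rewrite sub0seq.
case: s => [|x s].
  by move=> _; exists [::], [::]; split => //; rewrite sub0seq.
case: eqP => [<-|_] H.
  case: (IH _ H) => s1 [s2 [-> H1 H2]]; exists (x :: s1), s2; split => //=.
  by rewrite eqxx.
case: (IH _ H) => s1 [s2 [-> H1 H2]]; exists s1, s2; split => //.
exact: subseq_trans H1 (subseq_cons y c).
Qed.

Lemma D_star B l s : dclo (AStar B :: l) s ->
  exists y z, [/\ s = y ++ z, all (fun x => x \in B) y & dclo l z].
Proof.
case=> r /= [y [r' [-> ay Hr']]] sr.
case: (subseq_split sr) => s1 [s2 [-> H1 H2]].
exists s1, s2; split => //; last by exists r'.
apply/allP => x /(mem_subseq H1) xy; exact: (allP ay).
Qed.

Lemma cat_split (x r y z : seq A) : x ++ r = y ++ z ->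
  (exists x', z = x' ++ r) \/ (exists y', y = x ++ y' /\ r = y' ++ z).
Proof.
elim: x y => [|a x IH] y /=.
  by move=> ->; right; exists y.
case: y => [|b y] /=.
  by move=> <-; left; exists (a :: x).
case=> <- /IH [[x' ->]|[y' [-> ->]]]; [left; by exists x' | right; by exists y'].
Qed.

Lemma D_star_skip C l x r : dclo (AStar C :: l) (x ++ r) ->
  ~~ all (fun a => a \in C) x -> dclo l r.
Proof.
case/D_star => y [z [e ay Hz]] nx.
case: (cat_split e) => [[x' ez]|[y' [ey _]]].
  apply: D_down Hz _; rewrite ez; exact: suffix_subseq.
by move: ay; rewrite ey all_cat (negbTE nx).
Qed.

Lemma blk_cons B M : B != set0 -> 0 < M -> exists c s, blk M B = c :: s /\ c \in B.
Proof.
case/set0Pn => x xB; case: M => // M _.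
rewrite blk_S; case E: (enum B) => [|c s].
  by move: xB; rewrite -(mem_enum B) E.
exists c, (s ++ blk M B); split => //; by rewrite -(mem_enum B) E mem_head.
Qed.

Lemma not_all_enum B C : ~~ (B \subset C) -> ~~ all (fun a => a \in C) (enum B).
Proof.
apply: contra => /allP H; apply/subsetP => x xB; apply: H; by rewrite mem_enum.
Qed.

Lemma properA2 x y l : properA (x :: y :: l) ->
  [/\ ok_atom x, ok_adj x y & properA (y :: l)].
Proof.
rewrite /properA /= => /andP[/andP[ox /andP[oy ol]] /andP[axy p]].
by split => //; rewrite oy ol p.
Qed.

Lemma properA1 x l : properA (x :: l) -> ok_atom x.
Proof. by rewrite /properA /= => /andP[/andP[]]. Qed.

Lemma properA_tail x l : properA (x :: l) -> properA l.
Proof.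
case: l => [|y l]; first by [].
by case/properA2.
Qed.

Lemma strict a l M : properA (a :: l) -> 0 < M -> ~ dclo l (acanon M (a :: l)).
Proof.
elim: l a => [|b l IH] a.
  case: a => [a|B] Hp M0 /D_nil //=.
  have := blk_cons (properA1 Hp) M0 => -[c [s [-> _]]] //.
case/properA2 => oa ab pb M0; have IHb := IH b pb M0; clear IH.
case: a b oa ab pb IHb => [a|B] [b|C] oa ab pb IHb /= H.
- by apply: IHb; move: (D_let_behead H).
- apply: IHb; apply: (@D_star_skip C l [:: a]) => //=; by rewrite andbT.
- have [c [s [E cB]]] := blk_cons oa M0.
  move: H; rewrite E /= => H.
  have cb : c != b by apply: contraNneq ab => <-.
  have := D_let_skip H cb => H'; apply: IHb; apply: D_down H' _.
  have -> : c :: s ++ b :: acanon M l = (c :: s) ++ (b :: acanon M l) by [].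
  exact: suffix_subseq.
- case: M M0 IHb H => // M _ IHb; rewrite blk_S -catA => H.
  case/andP: ab => nBC _.
  have := D_star_skip H (not_all_enum nBC) => H'; apply: IHb; apply: D_down H' _.
  exact: suffix_subseq.
Qed.

Lemma first_contra x l l2 : properA (x :: l) -> aincl (x :: l) l2 -> aincl l2 l -> False.
Proof.
move=> p H1 H2; apply: (strict p (ltn0Sn 0)).
by apply: H2; apply: H1; apply: D_canon.
Qed.

Lemma enum_cons C : C != set0 -> exists c s, enum C = c :: s.
Proof.
case/set0Pn => x xC; case E: (enum C) => [|c s]; last by exists c, s.
by move: xC; rewrite -(mem_enum C) E.
Qed.

Lemma let_star a l1 C l2 : properA (ALet a :: l1) -> properA (AStar C :: l2) ->
  aincl (ALet a :: l1) (AStar C :: l2) -> aincl (AStar C :: l2) (ALet a :: l1) -> False.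
Proof.
move=> p1 p2 H12 H21; apply: (first_contra p1 H12); apply: InclI => M.
have := D_let_behead (H21 _ (D_canon M.+1 _)).
rewrite /= blk_S; have [c [s ->]] := enum_cons (properA1 p2) => /= H.
apply: D_down H _; rewrite -catA; apply: subseq_trans (suffix_subseq s _).
apply: cat_subseq => //; exact: canon_mono.
Qed.

Lemma unabsorbed B l M y z : properA (AStar B :: l) -> acanon M.+1 l = y ++ z ->
  all (fun x => x \in B) y -> subseq (acanon M l) z.
Proof.
case: l => [|[b|C] l] p; first by rewrite sub0seq.
- case/properA2: p => _ /= nb _.
  case: y => [|c y] /=.
    move=> <- _; have := canon_mono (ALet b :: l) (leqnSn M); by [].
  by case=> <- _ /andP[bB _]; rewrite bB in nb.
- case/properA2: p => _ /= /andP[_ nCB] _.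
  rewrite blk_S -catA => /cat_split [[x' ->] _|[y' [-> _]]].
    apply: subseq_trans (suffix_subseq _ _); apply: cat_subseq => //.
    exact: canon_mono.
  by rewrite all_cat (negbTE (not_all_enum nCB)).
Qed.

Lemma star_cancel B l1 l2 : properA (AStar B :: l1) ->
  aincl (AStar B :: l1) (AStar B :: l2) -> aincl l1 l2.
Proof.
move=> p H; apply: InclI => M.
case/D_star: (H _ (D_canon M.+1 (AStar B :: l1))) => y [z [e ay Hz]].
case: (cat_split e) => [[x' ez]|[y' [ey ez]]].
  apply: D_down Hz _; rewrite ez; apply: subseq_trans (suffix_subseq _ _).
  exact: canon_mono.
apply: D_down Hz _; apply: (unabsorbed p ez).
by move: ay; rewrite ey all_cat => /andP[].
Qed.

Lemma star_neq B l1 C l2 : properA (AStar C :: l2) -> ~~ (B \subset C) ->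
  aincl (AStar B :: l1) (AStar C :: l2) -> aincl (AStar C :: l2) (AStar B :: l1) -> False.
Proof.
move=> p nBC H12 H21; apply: (first_contra p H21); apply: InclI => M.
have := H12 _ (D_canon M.+1 (AStar B :: l1)); rewrite /= blk_S -catA => H.
have := D_star_skip H (not_all_enum nBC) => H'; apply: D_down H' _.
apply: cat_subseq => //; exact: canon_mono.
Qed.

Lemma canon_ne x l : properA (x :: l) -> acanon 1 (x :: l) = [::] -> False.
Proof.
case: x => [a|B] p //=.
by have [c [s [-> _]]] := blk_cons (properA1 p) (ltn0Sn 0).
Qed.

Theorem atoms_unique l1 l2 : properA l1 -> properA l2 ->
  aincl l1 l2 -> aincl l2 l1 -> l1 = l2.
Proof.
elim: l1 l2 => [|a1 l1 IH] [|a2 l2] // p1 p2 H12 H21.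
- by case: (canon_ne p2 (D_nil (H21 _ (D_canon 1 _)))).
- by case: (canon_ne p1 (D_nil (H12 _ (D_canon 1 _)))).
have q1 := properA_tail p1; have q2 := properA_tail p2.
case: a1 a2 p1 p2 H12 H21 => [a|B] [b|C] p1 p2 H12 H21.
- case: (eqVneq a b) => [eab|nab].
    subst b; congr (_ :: _); apply: IH => //; apply: InclI => M.
      by have := D_let_behead (H12 _ (D_canon M (ALet a :: l1))).
    by have := D_let_behead (H21 _ (D_canon M (ALet a :: l2))).
  case: (first_contra p1 H12); apply: InclI => M.
  apply: D_let_skip (H21 _ (D_canon M (ALet b :: l2))) _; by rewrite eq_sym.
- by case: (let_star p1 p2 H12 H21).
- by case: (let_star p2 p1 H21 H12).
- case: (eqVneq B C) => [eBC|nBC].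
    subst C; congr (_ :: _); apply: IH => //.
      exact: star_cancel p1 H12.
    exact: star_cancel p2 H21.
  case: (boolP (B \subset C)) => sBC.
    case: (boolP (C \subset B)) => sCB.
      by case/eqP: nBC; apply/eqP; rewrite eqEsubset sBC sCB.
    by case: (star_neq p1 sCB H21 H12).
  by case: (star_neq p2 sBC H12 H21).
Qed.

Fixpoint atoms (u : seq (seq A)) (B : seq {set A}) : seq atom :=
  match B, u with
  | [::], u0 :: _ => map ALet u0
  | b :: B', u0 :: u' => map ALet u0 ++ AStar b :: atoms u' B'
  | _, _ => [::]
  end.

Lemma canon_lets M u0 l : acanon M (map ALet u0 ++ l) = u0 ++ acanon M l.
Proof. by elim: u0 => //= a u0 ->. Qed.

Lemma lang_lets u0 l r : alang l r -> alang (map ALet u0 ++ l) (u0 ++ r).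
Proof. elim: u0 => //= a u0 IH H; exists (u0 ++ r) => //; exact: IH. Qed.

Lemma in_pow_all (b : {set A}) n (x : seq A) : in_pow b n x -> all (fun a => a \in b) x.
Proof.
case=> ws [_ H ->]; elim: ws H => //= w ws IH /andP[/andP[Hw _] Hws].
by rewrite all_cat Hw IH.
Qed.

Lemma inL_lang (B : seq {set A}) (u : seq (seq A)) n w : inL B u n w -> alang (atoms u B) w.
Proof.
elim: B u w => [|b B IH] [|u0 u] w //=.
  case: u => // ->; have := @lang_lets u0 [::] [::] erefl; by rewrite !cats0.
case=> x [r [-> Hx Hr]]; apply: lang_lets => /=.
exists x, r; split => //; first exact: (in_pow_all Hx).
exact: IH.
Qed.
Lemma inL_canon (B : seq {set A}) (u : seq (seq A)) n w M : inL B u n w -> M * #|A| <= n ->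
  subseq (acanon M (atoms u B)) w.
Proof.
elim: B u w => [|b B IH] [|u0 u] w //=.
  case: u => // -> _; have := canon_lets M u0 [::]; rewrite !cats0 => ->.
  exact: subseq_refl.
case=> x [r [-> Hx Hr]] Mn; rewrite canon_lets /=.
apply: cat_subseq => //; apply: cat_subseq; last exact: IH.
case: Hx => ws [sz Hws ->]; apply: (subseq_blocks (all_blk M b)).
  rewrite size_blk sz; apply: leq_trans Mn; by rewrite leq_mul2l max_card orbT.
move=> w' /(allP Hws) /andP[_ /forall_inP Hw'] y yb; exact: Hw'.
Qed.

Lemma properA_cons (x : atom) (s : seq atom) : ok_atom x -> (forall y q, s = y :: q -> ok_adj x y) ->
  properA s -> properA (x :: s).
Proof.
case: s => [|y q] ox H; first by rewrite /properA /= ox.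
rewrite /properA /= ox (H y q erefl) => /andP[-> ->] //.
Qed.

Lemma properA_lets (u0 : seq A) l : properA l ->
  (forall s a x l', u0 = rcons s a -> l = x :: l' -> ok_adj (ALet a) x) ->
  properA (map ALet u0 ++ l).
Proof.
elim: u0 => [|a u0 IH] //= Hl Hc.
apply: properA_cons => //.
  case: u0 {IH} Hc => [|c u0] Hc y s' /=.
    by move=> E; apply: (Hc [::] a y s').
  by case=> <-.
apply: IH => // s a' x l' E; apply: (Hc (a :: s) a' x l') => //; by rewrite E.
Qed.

Lemma proper_shift (u0 : seq A) (u : seq (seq A)) (b : {set A}) (B : seq {set A}) : proper_pattern (u0 :: u) (b :: B) -> proper_pattern u B.
Proof.
case=> [[sz nz] [H1 [H2 H3]]]; split; [split|split; [|split]].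
- by case: sz.
- by move=> i iB; apply: (nz i.+1).
- by move=> i iB s a E; apply: (H1 i.+1 iB s a E).
- case=> [|i] //= iB a s E; exact: (H2 i.+2 iB a s E).
- case=> [|i] //= iB E; exact: (H3 i.+2 iB E).
Qed.

Lemma proper_atoms (B : seq {set A}) (u : seq (seq A)) : proper_pattern u B -> properA (atoms u B).
Proof.
elim: B u => [|b B IH] [|u0 u] //=.
- move=> _; rewrite -(cats0 (map ALet u0)); apply: properA_lets => // s a x l' _ E; discriminate E.
move=> p; have pu := proper_shift p; have IHu := IH _ pu.
case: p => [[sz nz] [H1 [H2 H3]]].
have bnz : b != set0 by exact: (nz 0).
have last0 : forall s a, u0 = rcons s a -> a \notin b by move=> s a; exact: (H1 0).
have F : forall a s, nth [::] u 0 = a :: s -> a \notin b by move=> a s; exact: (H2 1).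
have G : 0 < size B -> nth [::] u 0 = [::] ->
   ~~ (b \subset nth set0 B 0) && ~~ (nth set0 B 0 \subset b).
  by move=> sB E; apply/andP; apply: (H3 1) => //=; rewrite andbT.
have su : size u = (size B).+1 by case: sz.
clear H1 H2 H3 nz pu IH sz.
apply: properA_lets; last by move=> s a x l' E [<- _] /=; exact: (last0 s a E).
apply: properA_cons => //.
case: u su F G IHu => [|u1 u] // [su] F G IHu y q /=.
case: B su G IHu => [|b' B] su G IHu.
  case: u1 F G {IHu} => [|c u1] //= F G [<- _].
  exact: (F c u1).
case: u1 F G {IHu} => [|c u1] F G /=.
  case=> <- _ /=; exact: G.
case=> <- _ /=; exact: (F c u1).
Qed.

Lemma lets_eq (u0 t0 : seq A) (x y : seq atom) : map ALet u0 ++ x = map ALet t0 ++ y ->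
  (forall a x', x <> ALet a :: x') -> (forall a y', y <> ALet a :: y') -> u0 = t0 /\ x = y.
Proof.
elim: u0 t0 => [|a u0 IH] [|b t0] //=.
- by move=> E Hx _; case: (Hx _ _ E).
- by move=> E _ Hy; case: (Hy _ _ (esym E)).
- case=> -> /IH H Hx Hy; have [-> ->] := H Hx Hy; by [].
Qed.

Lemma atoms_inj (B : seq {set A}) (u : seq (seq A)) (C : seq {set A}) (t : seq (seq A)) : size u = (size B).+1 -> size t = (size C).+1 ->
  atoms u B = atoms t C -> u = t /\ B = C.
Proof.
elim: B u C t => [|b B IH] [|u0 u] [|c C] [|t0 t] //=.
- case: u => // _; case: t => // _ E.
  have := @lets_eq u0 t0 [::] [::]; rewrite !cats0 => /(_ E) [] // -> _ //.
- case: u => // _ _ E.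
  have := @lets_eq u0 t0 [::] (AStar c :: atoms t C); rewrite cats0 => /(_ E) [] //.
- case: t => // _ _ E.
  have := @lets_eq u0 t0 (AStar b :: atoms u B) [::]; rewrite cats0 => /(_ E) [] //.
- move=> [su] [st] E.
  have [-> [-> E']] := @lets_eq u0 t0 _ _ E (fun _ _ => ltac:(discriminate))
                                           (fun _ _ => ltac:(discriminate)).
  by have [-> ->] := IH _ _ _ su st E'.
Qed.

End Atoms.

Theorem lemma3p2 (A : finType) (u t : seq (seq A)) (B C : seq {set A})
  (v w : nat -> seq A) :
  proper_pattern u B -> proper_pattern t C ->
  adequate u B v -> adequate t C w ->
  (forall n, simn n (v n) (w n)) ->
  u = t /\ B = C.
Proof.
move=> pu pt av aw sim.
apply: atoms_inj; [by case: pu => [[]] | by case: pt => [[]] |].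
apply: atoms_unique; [exact: proper_atoms | exact: proper_atoms | |].
- apply: InclI => M.
  set n := size (acanon M (atoms u B)) + M * #|A|.
  exists (w n); first exact: inL_lang (aw n).
  rewrite -(sim n); last exact: leq_addr.
  apply: inL_canon (av n) _; exact: leq_addl.
- apply: InclI => M.
  set n := size (acanon M (atoms t C)) + M * #|A|.
  exists (v n); first exact: inL_lang (av n).
  rewrite (sim n); last exact: leq_addr.
  apply: inL_canon (aw n) _; exact: leq_addl.
Qed.
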